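(* Let $n=2m$ and let $G=(g[i,j])_{1\le i,j\le n}$ be a symmetric matrix of indeterminates ($g[i,j]=g[j,i]$). For distinct indices $i_1,\dots,i_n$ put $g[i_1,\dots,i_m\,|\,i_{m+1},\dots,i_n]=\det\big(g[i_p,i_{m+q}]\big)_{1\le p,q\le m}$. Let $\mathfrak S_n$ act by permuting indices, $g[i,j]\mapsto g[\sigma(i),\sigma(j)]$. Then the $\mathbb{Q}$-linear span of the orbit of $g[1,\dots,m\,|\,m+1,\dots,n]$ under $\mathfrak S_n$ is an irreducible representation of $\mathfrak S_n$ isomorphic to the Specht module of shape $[2^m]$; more precisely, the assignment $g[i_1,\dots,i_m\,|\,i_{m+1},\dots,i_n]\mapsto \Delta^x(i_1,\dots,i_m)\,\Delta^x(i_{m+1},\dots,i_n)$ extends to an $\mathfrak S_n$-equivariant linear isomorphism onto the span of the polynomials $\Delta^x(i_1,\dots,i_m)\Delta^x(i_{m+1},\dots,i_n)$.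
   Context: $\Delta^x(i_1,\dots,i_k)=\prod_{1\le p<q\le k}(x_{i_p}-x_{i_q})$; $\mathfrak S_n$ acts on polynomials in $x_1,\dots,x_n$ by $x_i\mapsto x_{\sigma(i)}$. The shape $[2^m]$ consists of $m$ rows of length $2$ (two columns of height $m$); its Specht module is the span of the polynomials $\Delta^x(i_1,\dots,i_m)\Delta^x(i_{m+1},\dots,i_n)$ for $(i_1,\dots,i_n)$ ranging over permutations of $1,\dots,n$. *)

(* Defs.v *)
From mathcomp Require Import all_boot all_order all_algebra all_fingroup.
From mathcomp Require Import mpoly.
Set Implicit Arguments. Unset Strict Implicit. Unset Printing Implicit Defensive.
Import GRing.Theory.
Local Open Scope ring_scope.

Notation idx m := 'I_(m + m).

(* Ambient polynomial ring: Q[y_k | k < n*n]; variable y_(i,j) (i<=j) stands for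
   g[i,j] = g[j,i].  (Variables y_(i,j) with i > j are simply unused.) *)
Definition gring (m : nat) := {mpoly rat[(m + m) * (m + m)]}.

Definition gvar m (i j : idx m) : 'I_((m + m) * (m + m)) := mxvec_index i j.

Definition gdec m (k : 'I_((m + m) * (m + m))) : idx m * idx m :=
  enum_val (cast_ord (esym (mxvec_cast (m + m) (m + m))) k).

Definition g m (i j : idx m) : gring m :=
  if (i <= j)%N then 'X_(gvar i j) else 'X_(gvar j i).

Definition gpact m (s : 'S_(m + m)) (p : gring m) : gring m :=
  p \mPo [tuple g (s (gdec k).1) (s (gdec k).2) | k < (m + m) * (m + m)].

(* g[i_1..i_m | i_{m+1}..i_n] for the arrangement i_k = s k of distinct indices *)
Definition gminor m (s : 'S_(m + m)) : gring m :=
  \det (\matrix_(p < m, q < m) g (s (lshift m p)) (s (rshift m q))).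

Definition xring (m : nat) := {mpoly rat[m + m]}.

Definition xpact m (s : 'S_(m + m)) (p : xring m) : xring m :=
  p \mPo [tuple 'X_(s k) | k < m + m].

Definition xdelta m (s : 'S_(m + m)) : xring m :=
  (\prod_(p < m) \prod_(q < m | (p < q)%N)
      ('X_(s (lshift m p)) - 'X_(s (lshift m q)))) *
  (\prod_(p < m) \prod_(q < m | (p < q)%N)
      ('X_(s (rshift m p)) - 'X_(s (rshift m q)))).

Definition in_span (V : lmodType rat) (S : seq V) (v : V) : Prop :=
  exists c : 'I_(size S) -> rat, v = \sum_(i < size S) c i *: S`_i.

Definition gspan m : gring m -> Prop :=
  in_span [seq gpact s (gminor (1 : 'S_(m + m))) | s <- enum [set: 'S_(m + m)]].

Definition specht2 m : xring m -> Prop :=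
  in_span [seq xdelta s | s <- enum [set: 'S_(m + m)]].

Definition irreducible_rep m (T : lmodType rat)
    (act : 'S_(m + m) -> T -> T) (V : T -> Prop) : Prop :=
  (exists v, V v /\ v <> 0) /\
  forall W : T -> Prop,
    (forall v, W v -> V v) ->
    W 0 ->
    (forall a u v, W u -> W v -> W (a *: u + v)) ->
    (forall s v, W v -> W (act s v)) ->
    (forall v, W v -> v = 0) \/ (forall v, V v -> W v).

(* Main.v *)
Require Import Defs.
From mathcomp Require Import all_boot all_order all_algebra all_fingroup.
From mathcomp Require Import mpoly.
Set Implicit Arguments. Unset Strict Implicit. Unset Printing Implicit Defensive.
Import GRing.Theory Num.Theory.
Local Open Scope ring_scope.

Section Basics.
Variable m : nat.
Local Notation n := (m + m).
Local Notation I := 'I_(m + m).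
Local Notation lsh := (@lshift m m).
Local Notation rsh := (@rshift m m).

Lemma gdec_gvar (i j : I) : gdec (gvar i j) = (i, j).
Proof. by rewrite /gdec /gvar /mxvec_index cast_ordK enum_rankK. Qed.

Lemma gC (i j : I) : g i j = g j i.
Proof.
rewrite /g; case: (leqP i j) => hij; case: (leqP j i) => hji //.
- by have -> : i = j by apply/val_inj/eqP; rewrite eqn_leq hij hji.
- by move: (ltn_trans hij hji); rewrite ltnn.
Qed.

Lemma gpact_g (s : 'S_n) (i j : I) : gpact s (g i j) = g (s i) (s j).
Proof.
rewrite /gpact /g; case: ifP => _; rewrite comp_mpolyXU -tnth_nth tnth_mktuple
  gdec_gvar //=; exact: gC.
Qed.

Lemma gpactD (s : 'S_n) : {morph gpact s : x y / x + y}.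
Proof. by move=> x y; rewrite /gpact comp_mpolyD. Qed.
Lemma gpactZ (s : 'S_n) c (p : gring m) : gpact s (c *: p) = c *: gpact s p.
Proof. by rewrite /gpact comp_mpolyZ. Qed.
Lemma gpact0 (s : 'S_n) : gpact s 0 = 0.
Proof. by rewrite /gpact comp_mpoly0. Qed.
Lemma gpact_sum (s : 'S_n) (J : finType) (c : J -> rat) (F : J -> gring m) :
  gpact s (\sum_j c j *: F j) = \sum_j c j *: gpact s (F j).
Proof.
rewrite /gpact raddf_sum; apply: eq_bigr => j _; exact: comp_mpolyZ.
Qed.

Lemma gpact_gminor (s t : 'S_n) : gpact s (gminor t) = gminor (t * s).
Proof.
rewrite /gminor /gpact -det_map_mx; congr (\det _); apply/matrixP => p q.
by rewrite !mxE !permM; apply: gpact_g.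
Qed.

Definition mono (t : 'S_n) : gring m :=
  \prod_(p < m) g (t (lsh p)) (t (rsh p)).

Lemma gpact_mono (s t : 'S_n) : gpact s (mono t) = mono (t * s).
Proof.
rewrite /mono /gpact rmorph_prod; apply: eq_bigr => p _.
by rewrite !permM; apply: gpact_g.
Qed.

End Basics.

Section Comb.
Variable m : nat.
Local Notation n := (m + m).
Local Notation I := 'I_(m + m).
Local Notation lsh := (@lshift m m).
Local Notation rsh := (@rshift m m).

Lemma split_l (p : 'I_m) : split (lsh p) = inl p.
Proof. exact: (unsplitK (inl _ p)). Qed.
Lemma split_r (p : 'I_m) : split (rsh p) = inr p.
Proof. exact: (unsplitK (inr _ p)). Qed.

Definition pairidx (x : I) : 'I_m :=
  match split x with inl p => p | inr q => q end.
Lemma pair_cases x : x = lsh (pairidx x) \/ x = rsh (pairidx x).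
Proof.
rewrite /pairidx -[x]splitK; case: (split x) => [p|q] /=.
  by rewrite split_l; left. by rewrite split_r; right.
Qed.

Lemma pairidx_l k : pairidx (lsh k) = k.
Proof. by rewrite /pairidx split_l. Qed.
Lemma pairidx_r k : pairidx (rsh k) = k.
Proof. by rewrite /pairidx split_r. Qed.

Definition swpf (x : I) : I :=
  match split x with inl p => rsh p | inr q => lsh q end.
Lemma swpK : involutive swpf.
Proof.
by move=> x; case: (pair_cases x) => ->; rewrite /swpf ?split_l ?split_r ?split_l.
Qed.
Definition swp : 'S_n := perm (can_inj swpK).
Lemma swpswp y : swp (swp y) = y.
Proof. by rewrite !permE swpK. Qed.
Lemma swp_l p : swp (lsh p) = rsh p.
Proof. by rewrite permE /swpf split_l. Qed.
Lemma swp_r p : swp (rsh p) = lsh p.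
Proof. by rewrite permE /swpf split_r. Qed.


Definition liftf (s : 'S_m) (x : I) : I :=
  match split x with inl p => lsh p | inr q => rsh (s q) end.
Lemma liftK s : cancel (liftf s) (liftf s^-1).
Proof.
by move=> x; case: (pair_cases x) => ->; rewrite /liftf ?split_l ?split_r ?split_l ?split_r ?permK.
Qed.
Definition lft (s : 'S_m) : 'S_n := perm (can_inj (liftK s)).
Lemma lft_l s p : lft s (lsh p) = lsh p.
Proof. by rewrite permE /liftf split_l. Qed.
Lemma lft_r s q : lft s (rsh q) = rsh (s q).
Proof. by rewrite permE /liftf split_r. Qed.
Lemma lftM a b : lft (a * b)%g = (lft a * lft b)%g.
Proof.
apply/permP => x; case: (pair_cases x) => ->.
  by rewrite permM !lft_l. by rewrite permM !lft_r permM.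
Qed.
Lemma lft1 : lft 1%g = 1%g.
Proof.
apply/permP => x; case: (pair_cases x) => ->.
  by rewrite lft_l perm1. by rewrite lft_r !perm1.
Qed.
Lemma lftV a : lft a^-1%g = (lft a)^-1%g.
Proof. by apply/eqP; rewrite eq_sym eq_invg_mul -lftM mulgV lft1. Qed.

Definition partner (t : 'S_n) : 'S_n := (t^-1 * swp * t)%g.
Lemma partnerE t x : partner t x = t (swp (t^-1%g x)).
Proof. by rewrite !permM. Qed.
Lemma partnerK t : involutive (partner t).
Proof. by move=> x; rewrite !partnerE permK swpswp permKV. Qed.

Definition adj (t : 'S_n) (i j : I) : bool := partner t i == j.
Lemma adjC t i j : adj t i j = adj t j i.
Proof.
rewrite /adj; apply/eqP/eqP => <-; by rewrite partnerK.
Qed.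
Lemma partner_l t p : partner t (t (lsh p)) = t (rsh p).
Proof. by rewrite partnerE permK swp_l. Qed.
Lemma partner_r t p : partner t (t (rsh p)) = t (lsh p).
Proof. by rewrite partnerE permK swp_r. Qed.
Lemma adj_edge t p : adj t (t (lsh p)) (t (rsh p)).
Proof. by rewrite /adj partner_l. Qed.

End Comb.

Section Ev.
Variable m : nat.
Local Notation n := (m + m).
Local Notation I := 'I_(m + m).
Local Notation lsh := (@lshift m m).
Local Notation rsh := (@rshift m m).

Definition pt (t : 'S_n) : 'I_(n * n) -> rat :=
  fun k => (adj t (gdec k).1 (gdec k).2)%:R.
Definition ev (t : 'S_n) (p : gring m) : rat := p.@[pt t].

Lemma ev_g t (i j : I) : ev t (g i j) = (adj t i j)%:R.
Proof.
by rewrite /ev /g; case: ifP => _; rewrite mevalXU /pt gdec_gvar //= adjC.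
Qed.

Lemma adj_act (t s : 'S_n) a b : adj t (s a) (s b) = adj (t * s^-1)%g a b.
Proof.
rewrite /adj !partnerE invMg invgK !permM.
by apply/eqP/eqP => h; [rewrite h permK | rewrite -h permKV].
Qed.

Lemma ev_gpact t s p : ev t (gpact s p) = ev (t * s^-1)%g p.
Proof.
rewrite /ev /gpact comp_mpoly_meval; apply: meval_eq => k.
rewrite tnth_mktuple; transitivity (ev t (g (s (gdec k).1) (s (gdec k).2))) => //.
by rewrite ev_g adj_act.
Qed.

Lemma evD t : {morph ev t : x y / x + y}.
Proof. by move=> x y; rewrite /ev mevalD. Qed.
Lemma evZ t c p : ev t (c *: p) = c * ev t p.
Proof. by rewrite /ev mevalZ. Qed.
Lemma ev0 t : ev t 0 = 0.
Proof. by rewrite /ev meval0. Qed.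
Lemma ev_sum t (J : finType) (c : J -> rat) (F : J -> gring m) :
  ev t (\sum_j c j *: F j) = \sum_j c j * ev t (F j).
Proof.
rewrite /ev raddf_sum; apply: eq_bigr => j _; exact: mevalZ.
Qed.

Lemma ev_prod t (F : 'I_m -> gring m) :
  ev t (\prod_p F p) = \prod_p ev t (F p).
Proof. exact: rmorph_prod. Qed.

Lemma ev_mono t u :
  ev t (mono u) = ([forall p, adj t (u (lsh p)) (u (rsh p))])%:R.
Proof.
rewrite /mono ev_prod.
case: (boolP [forall p, _]) => [/forallP H | /forallPn [p Hp]].
  by apply: big1 => p _; rewrite ev_g H.
by rewrite (bigD1 p) //= ev_g (negbTE Hp) mul0r.
Qed.

Lemma mono_eq_of (t t' : 'S_n) :
  (forall p, adj t' (t (lsh p)) (t (rsh p))) -> mono t = mono t'.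
Proof.
move=> H.
pose q p := pairidx (t'^-1%g (t (lsh p))).
have inv_eq (a b : I) : t'^-1%g a = b -> a = t' b by move<-; rewrite permKV.
have key p : g (t (lsh p)) (t (rsh p)) = g (t' (lsh (q p))) (t' (rsh (q p))).
  have := H p; rewrite /adj partnerE => /eqP <-.
  rewrite /q; case: (pair_cases (t'^-1%g (t (lsh p)))); set k := pairidx _ => E.
    by rewrite E swp_l (inv_eq _ _ E).
  by rewrite E swp_r (inv_eq _ _ E) gC.
have qinj : injective q.
  move=> p1 p2 eq12.
  have h2 : t (rsh p2) = t' (swp m (t'^-1%g (t (lsh p2)))).
    by have := H p2; rewrite /adj partnerE => /eqP.
  have c1 := pair_cases (t'^-1%g (t (lsh p1))).
  have c2 := pair_cases (t'^-1%g (t (lsh p2))).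
  rewrite /q in eq12; rewrite eq12 in c1.
  move: c1 c2 h2; set k := pairidx _.
  case=> /inv_eq E1; case=> E2; rewrite E2 ?swp_l ?swp_r => h2; move/inv_eq: E2 => E2.
  - by move: E1; rewrite -E2 => /perm_inj/lshift_inj.
  - by move: E1; rewrite -h2 => /perm_inj/eqP; rewrite eq_lrshift.
  - by move: E1; rewrite -h2 => /perm_inj/eqP; rewrite eq_lrshift.
  - by move: E1; rewrite -E2 => /perm_inj/lshift_inj.
rewrite /mono [RHS](reindex_inj qinj) /=; apply: eq_bigr => p _; exact: key.
Qed.

Lemma adj_self t p : adj t (t (lsh p)) (t (rsh p)).
Proof. exact: adj_edge. Qed.

Lemma ev_mono_self t : ev t (mono t) = 1.
Proof.
rewrite ev_mono; case: (boolP [forall p, _]) => // /forallPn [p].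
by rewrite adj_self.
Qed.

Lemma ev01 (t t' : 'S_n) : ev t' (mono t) = (mono t == mono t')%:R.
Proof.
case: eqP => [->|ne]; first exact: ev_mono_self.
rewrite ev_mono; case: (boolP [forall p, _]) => // /forallP H.
by case: ne; apply: mono_eq_of.
Qed.

Lemma mono_adj (t t' : 'S_n) : mono t = mono t' ->
  forall p, adj t' (t (lsh p)) (t (rsh p)).
Proof.
move=> e p; have := ev01 t t'; rewrite ev_mono e eqxx.
case: (boolP [forall p, _]) => [/forallP //|_] /= /esym/eqP; by rewrite oner_eq0.
Qed.

End Ev.

Section Kappa.
Variable m : nat.
Local Notation n := (m + m).
Local Notation I := 'I_(m + m).
Local Notation lsh := (@lshift m m).
Local Notation rsh := (@rshift m m).

Definition sg (s : 'S_m) : rat := (-1) ^+ s.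

Lemma sgM a b : sg (a * b)%g = sg a * sg b.
Proof. by rewrite /sg odd_permM signr_addb. Qed.
Lemma sgV a : sg a^-1%g = sg a.
Proof. by rewrite /sg odd_permV. Qed.
Lemma sg_sq a : sg a * sg a = 1.
Proof. by rewrite /sg -signr_addb addbb. Qed.

Lemma sum_sg_l (V : lmodType rat) (F : 'S_m -> V) (r : 'S_m) :
  \sum_s sg s *: F (r * s)%g = sg r *: \sum_s sg s *: F s.
Proof.
rewrite [LHS](reindex_inj (mulgI r^-1)%g) /= scaler_sumr; apply: eq_bigr => s _.
by rewrite mulKVg sgM sgV scalerA.
Qed.

Lemma sum_sg_r (V : lmodType rat) (F : 'S_m -> V) (r : 'S_m) :
  \sum_s sg s *: F (s * r)%g = sg r *: \sum_s sg s *: F s.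
Proof.
rewrite [LHS](reindex_inj (mulIg r^-1)%g) /= scaler_sumr; apply: eq_bigr => s _.
by rewrite mulgKV sgM sgV scalerA mulrC.
Qed.

Lemma gminor_expand (s : 'S_n) :
  gminor s = \sum_(x : 'S_m) sg x *: mono (lft x * s)%g.
Proof.
rewrite /gminor /determinant; apply: eq_bigr => x _.
rewrite /sg mulr_sign scaler_sign; congr (if _ then - _ else _);
  rewrite /mono; apply: eq_bigr => p _; by rewrite mxE !permM lft_l lft_r.
Qed.

Lemma gminor1_expand : gminor (1%g : 'S_n) = \sum_(x : 'S_m) sg x *: mono (lft x).
Proof. by rewrite gminor_expand; apply: eq_bigr => x _; rewrite mulg1. Qed.

Lemma gminor_lft (r : 'S_m) : gminor (lft r) = sg r *: gminor 1%g.
Proof.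
rewrite gminor_expand gminor1_expand -sum_sg_r; apply: eq_bigr => x _.
by rewrite lftM.
Qed.

Definition kappa (v : gring m) : gring m :=
  \sum_(x : 'S_m) sg x *: gpact (lft x) v.

Lemma kappa_sum (J : finType) (c : J -> rat) (F : J -> gring m) :
  kappa (\sum_j c j *: F j) = \sum_j c j *: kappa (F j).
Proof.
rewrite /kappa; under eq_bigr do rewrite gpact_sum scaler_sumr.
rewrite exchange_big; apply: eq_bigr => j _; rewrite scaler_sumr.
by apply: eq_bigr => x _; rewrite !scalerA mulrC.
Qed.

Lemma mono_lft_inj (a b : 'S_m) : mono (lft a) = mono (lft b) -> a = b.
Proof.
move=> /mono_adj H; apply/permP => p; have := H p.
rewrite lft_l lft_r -{1}(lft_l b p) /adj partner_l lft_r => /eqP /rshift_inj.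
by move->.
Qed.

Lemma partner_nofix (t : 'S_n) x : partner t x != x.
Proof.
rewrite partnerE; apply/eqP => h.
have : swp m (t^-1%g x) = t^-1%g x by rewrite -{2}h permK.
by case: (pair_cases (t^-1%g x)) => ->; rewrite ?swp_l ?swp_r => /eqP;
  rewrite ?eq_lrshift ?eq_rlshift.
Qed.

Lemma kappa_mono (t : 'S_n) : kappa (mono t) = ev t (gminor 1%g) *: gminor 1%g.
Proof.
have evE : ev t (gminor 1%g) = \sum_x sg x * (mono (lft x) == mono t)%:R.
  by rewrite gminor1_expand ev_sum; apply: eq_bigr => x _; rewrite ev01.
case: (boolP [exists x, mono t == mono (lft x)]) => [/existsP [x0 /eqP e0]|].
  have -> : ev t (gminor 1%g) = sg x0.
    rewrite evE (bigD1 x0) //= e0 eqxx mulr1 big1 ?addr0 // => x nx.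
    case: eqP => [/mono_lft_inj ex|]; last by rewrite mulr0.
    by rewrite ex eqxx in nx.
  rewrite e0 /kappa; under eq_bigr do rewrite gpact_mono -lftM.
  by rewrite (sum_sg_l (fun x => mono (lft x))) gminor1_expand.
move=> /existsPn nosig.
have -> : ev t (gminor 1%g) = 0.
  rewrite evE big1 // => x _; have := nosig x; rewrite eq_sym => /negbTE ->.
  by rewrite mulr0.
rewrite scale0r.
have [q1 [q2 [nq e12]]] : exists q1 q2, q1 != q2 /\ partner t (rsh q1) = rsh q2.
  case: (boolP [exists q1, exists q2, (q1 != q2) && (partner t (rsh q1) == rsh q2)]).
    by move=> /existsP [q1 /existsP [q2 /andP [h1 /eqP h2]]]; exists q1, q2.
  move=> /existsPn H.
  have hl q : partner t (rsh q) = lsh (pairidx (partner t (rsh q))).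
    case: (pair_cases (partner t (rsh q))) => // E.
    have := H q; move/existsPn => /(_ (pairidx (partner t (rsh q)))).
    rewrite -E eqxx andbT negbK => /eqP eq.
    by move: (partner_nofix t (rsh q)); rewrite E -eq eqxx.
  pose pi q := pairidx (partner t (rsh q)).
  have piinj : injective pi.
    move=> a b eab; apply: rshift_inj; apply: (@perm_inj _ (partner t)).
    by rewrite (hl a) (hl b) -/(pi a) -/(pi b) eab.
  set s0 := ((perm piinj)^-1)%g.
  have : mono (lft s0) = mono t.
    apply: mono_eq_of => p; rewrite lft_l lft_r.
    have hp : pi (s0 p) = p by rewrite -(permE piinj) permKV.
    by rewrite /adj -{1}hp -(hl (s0 p)) partnerK.
  by move=> e; have := nosig s0; rewrite e eqxx.
pose T := lft (tperm q1 q2).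
have e21 : partner t (rsh q2) = rsh q1 by rewrite -e12 partnerK.
have Tfix v : v != rsh q1 -> v != rsh q2 -> T v = v.
  case: (pair_cases v) => ->; rewrite /T ?lft_l ?lft_r // => h1 h2.
  rewrite tpermD //; [apply: contra_neq h1 | apply: contra_neq h2]; by move=> ->.
have Tcomm v : partner t (T v) = T (partner t v).
  case: (eqVneq v (rsh q1)) => [->|n1].
    by rewrite /T lft_r tpermL e21 e12 lft_r tpermR.
  case: (eqVneq v (rsh q2)) => [->|n2].
    by rewrite /T lft_r tpermR e21 e12 lft_r tpermL.
  rewrite (Tfix v) // Tfix //.
    by apply: contra_neq n2 => h; rewrite -(partnerK t v) h e12.
  by apply: contra_neq n1 => h; rewrite -(partnerK t v) h e21.
have monoT : mono (t * T)%g = mono t.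
  apply: mono_eq_of => p; by rewrite !permM /adj Tcomm partner_l.
set S := kappa (mono t).
have hS : S = - S.
  have : S = sg (tperm q1 q2) *: S.
    rewrite /S /kappa -sum_sg_l; apply: eq_bigr => x _.
    congr (_ *: _); rewrite [RHS]gpact_mono lftM mulgA -/T.
    by rewrite -(gpact_mono (lft x) (t * T)%g) monoT.
  by rewrite /sg odd_tperm nq expr1 scaleN1r.
have : (2%:R : rat) *: S = 0 by rewrite scaler_nat mulr2n {1}hS addNr.
by move/eqP; rewrite scaler_eq0 pnatr_eq0 /= => /eqP.
Qed.

End Kappa.

Section Span.

Lemma sum_nth_enum (T : finType) (V : lmodType rat) (x0 : T) k
    (hk : k = size (enum [set: T])) (H : T -> V) :
  \sum_(i < k) H (nth x0 (enum [set: T]) i) = \sum_s H s.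
Proof.
subst k; transitivity (\sum_(s <- enum [set: T]) H s).
  by rewrite (big_nth x0) big_mkord.
rewrite big_enum /=; apply: eq_bigl => s; exact: in_setT.
Qed.

Lemma span_mapP (T : finType) (V : lmodType rat) (x0 : T) (F : T -> V) (v : V) :
  in_span [seq F s | s <- enum [set: T]] v <-> exists c : T -> rat, v = \sum_s c s *: F s.
Proof.
set E := enum [set: T].
have uE : uniq E by exact: enum_uniq.
have hk : size [seq F s | s <- E] = size E by rewrite size_map.
have x0E : x0 \in E by rewrite mem_enum in_setT.
split.
  move=> [c ->].
  have k0 : (0 < size [seq F s | s <- E])%N by rewrite hk lt0n size_eq0; apply/eqP => e; rewrite e in x0E.
  pose i0 := Ordinal k0.
  exists (fun s => c (insubd i0 (index s E))).
  rewrite -(sum_nth_enum x0 hk (fun s => c (insubd i0 (index s E)) *: F s)).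
  apply: eq_bigr => i _.
  have ilt : (i < size E)%N by rewrite -hk.
  rewrite index_uniq // (nth_map x0) //; congr (c _ *: _).
  by apply: val_inj; rewrite /= insubdK //; exact: ltn_ord.
move=> [c ->]; exists (fun i => c (nth x0 E i)).
rewrite -(sum_nth_enum x0 hk (fun s => c s *: F s)).
apply: eq_bigr => i _; rewrite (nth_map x0) //; by rewrite -hk.
Qed.

End Span.

Section Irr.
Variable m : nat.
Local Notation n := (m + m).
Local Notation I := 'I_(m + m).

Lemma gspanP (v : gring m) :
  gspan v <-> exists c : 'S_n -> rat, v = \sum_s c s *: gminor s.
Proof.
rewrite /gspan (span_mapP 1%g (fun s => gpact s (gminor 1%g))).
by split => -[c ->]; exists c; apply: eq_bigr => s _; rewrite gpact_gminor mul1g.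
Qed.

Lemma specht2P (v : xring m) :
  specht2 v <-> exists c : 'S_n -> rat, v = \sum_s c s *: xdelta s.
Proof. exact: (span_mapP 1%g). Qed.

Lemma closed_sum (V : lmodType rat) (W : V -> Prop) :
  W 0 -> (forall a u v, W u -> W v -> W (a *: u + v)) ->
  forall (J : finType) (c : J -> rat) (F : J -> V),
  (forall j, W (F j)) -> W (\sum_j c j *: F j).
Proof.
move=> W0 WC J c F WF; apply: (big_ind W) => //.
  by move=> x y Wx Wy; rewrite -[x]scale1r; apply: WC.
by move=> j _; rewrite -[_ *: _]addr0; apply: WC.
Qed.

Lemma gspan0 : gspan (0 : gring m).
Proof. by apply/gspanP; exists (fun _ => 0); rewrite big1 // => s _; rewrite scale0r. Qed.

Lemma gspanC a u v : gspan u -> gspan v -> gspan (a *: u + v :> gring m).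
Proof.
move=> /gspanP [c ->] /gspanP [d ->]; apply/gspanP.
exists (fun s => a * c s + d s).
rewrite scaler_sumr -big_split; apply: eq_bigr => s _.
by rewrite scalerA scalerDl.
Qed.

Lemma gspan_gminor (s : 'S_n) : gspan (gminor s).
Proof.
apply/gspanP; exists (fun t => (t == s)%:R).
rewrite (bigD1 s) //= eqxx scale1r big1 ?addr0 // => t /negbTE ->.
by rewrite scale0r.
Qed.

Lemma gspan_act (s : 'S_n) v : gspan v -> gspan (gpact s v).
Proof.
move=> /gspanP [c ->]; rewrite gpact_sum.
apply: closed_sum; [exact: gspan0 | exact: gspanC | move=> t].
rewrite gpact_gminor; exact: gspan_gminor.
Qed.

Lemma gspan_mono v : gspan v ->
  exists a : 'S_n * 'S_m -> rat,
    v = \sum_(j : 'S_n * 'S_m) a j *: mono (lft j.2 * j.1)%g.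
Proof.
move=> /gspanP [c ->]; exists (fun j => c j.1 * sg j.2).
rewrite -(pair_big xpredT xpredT (fun s x => (c s * sg x) *: mono (lft x * s)%g)) /=.
apply: eq_bigr => s _; rewrite gminor_expand scaler_sumr; apply: eq_bigr => x _.
by rewrite scalerA.
Qed.

Lemma ev_inj (J : finType) (a : J -> rat) (f : J -> 'S_n) :
  (forall t, ev t (\sum_j a j *: mono (f j)) = 0) ->
  \sum_j a j *: mono (f j) = 0.
Proof.
move=> H.
pose N (u : 'S_n) : rat := (#|[pred t | mono t == mono u]|)%:R.
have Nne u : N u != 0.
  rewrite /N pnatr_eq0 -lt0n; apply/card_gt0P; exists u; by rewrite inE.
have NE u t : mono t = mono u -> N t = N u.
  by move=> e; rewrite /N; congr (_%:R); apply: eq_card => x; rewrite !inE e.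
have avg u : mono u =
    \sum_t ((N u)^-1 * (mono t == mono u)%:R) *: mono t.
  transitivity (\sum_t ((N u)^-1 * (mono t == mono u)%:R) *: mono u).
    rewrite -scaler_suml -mulr_sumr.
    have -> : \sum_t ((mono t == mono u)%:R : rat) = N u.
      rewrite /N -sum1_card natr_sum [RHS]big_mkcond /=; apply: eq_bigr => t _.
      by rewrite inE; case: eqP.
    by rewrite mulVf // scale1r.
  by apply: eq_bigr => t _; case: eqP => [->|_]; rewrite ?mulr0 ?scale0r.
have -> : \sum_j a j *: mono (f j) =
    \sum_j \sum_t (a j * ((N (f j))^-1 * (mono t == mono (f j))%:R)) *: mono t.
  apply: eq_bigr => j _; rewrite {1}avg scaler_sumr; apply: eq_bigr => t _.
  by rewrite scalerA.
rewrite exchange_big big1 // => t _; rewrite -scaler_suml.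
have -> : \sum_j a j * ((N (f j))^-1 * (mono t == mono (f j))%:R) =
    (N t)^-1 * ev t (\sum_j a j *: mono (f j)).
  rewrite ev_sum mulr_sumr; apply: eq_bigr => j _; rewrite ev01 eq_sym.
  case: eqP => [e|_]; last by rewrite !mulr0.
  by rewrite (NE _ _ e) mulrCA.
by rewrite H mulr0 scale0r.
Qed.

End Irr.

From Stdlib Require Import Classical_Prop.
Section Form.
Variable m : nat.
Local Notation n := (m + m).

Definition form (v w : gring m) : rat := \sum_(t : 'S_n) ev t v * ev t w.

Lemma form_gpact (s : 'S_n) v w : form (gpact s v) w = form v (gpact s^-1%g w).
Proof.
rewrite /form; under eq_bigr do rewrite ev_gpact.
under [RHS]eq_bigr do rewrite ev_gpact invgK.
rewrite [LHS](reindex_inj (mulIg s)) /=; apply: eq_bigr => t _.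
by rewrite mulgK.
Qed.

Lemma form_sumr v (J : finType) (c : J -> rat) (F : J -> gring m) :
  form v (\sum_j c j *: F j) = \sum_j c j * form v (F j).
Proof.
rewrite /form; under eq_bigr do rewrite ev_sum mulr_sumr.
rewrite exchange_big; apply: eq_bigr => j _; rewrite mulr_sumr.
by apply: eq_bigr => t _; rewrite mulrCA.
Qed.

Lemma form_suml w (J : finType) (c : J -> rat) (F : J -> gring m) :
  form (\sum_j c j *: F j) w = \sum_j c j * form (F j) w.
Proof.
rewrite /form; under eq_bigr do rewrite ev_sum mulr_suml.
rewrite exchange_big; apply: eq_bigr => j _; rewrite mulr_sumr.
by apply: eq_bigr => t _; rewrite mulrA.
Qed.

Lemma form0l w : form 0 w = 0.
Proof. by rewrite /form big1 // => t _; rewrite ev0 mul0r. Qed.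

Lemma formZr v c w : form v (c *: w) = c * form v w.
Proof.
by rewrite /form mulr_sumr; apply: eq_bigr => t _; rewrite evZ mulrCA.
Qed.

Lemma ev1_gminor1 : ev 1%g (gminor (1%g : 'S_n)) = 1.
Proof.
rewrite gminor1_expand ev_sum (bigD1 1%g) //= lft1 ev_mono_self.
rewrite /sg odd_perm1 mulr1 big1 ?addr0 // => x nx.
rewrite -lft1 ev01; case: eqP => [/mono_lft_inj ex|]; last by rewrite mulr0.
by rewrite ex eqxx in nx.
Qed.

Lemma gminor1_neq0 : gminor (1%g : 'S_n) != 0.
Proof. by apply/eqP => e; have := ev1_gminor1; rewrite e ev0 => /eqP; rewrite eq_sym oner_eq0. Qed.

Lemma gspan_irr : irreducible_rep (@gpact m) (@gspan m).
Proof.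
split.
  by exists (gminor 1%g); split; [exact: gspan_gminor | exact/eqP/gminor1_neq0].
move=> W sub W0 WC Wact.
case: (classic (exists w, W w /\ w <> 0)); last first.
  move=> H; left => v Wv; apply: NNPP => nv; apply: H; by exists v.
move=> [w [Ww wnz]]; right.
have [t0 ht0] : exists t, ev t w != 0.
  case: (boolP [exists t, ev t w != 0]) => [/existsP //|/existsPn H].
  exfalso; apply: wnz; have [a ew] := gspan_mono (sub w Ww).
  rewrite ew; apply: ev_inj => t; rewrite -ew; have := H t; by rewrite negbK => /eqP.
have fww : form w w != 0.
  apply/eqP => /psumr_eq0P h.
  have : ev t0 w * ev t0 w = 0 by apply: h => // t _; rewrite -expr2 sqr_ge0.
  by move/eqP; rewrite mulf_eq0 orbb (negbTE ht0).
have [u hu] : exists u, form w (gminor u) != 0.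
  case: (boolP [exists u, form w (gminor u) != 0]) => [/existsP //|/existsPn H].
  exfalso; move: fww; have [c ec] := (gspanP w).1 (sub w Ww).
  rewrite {2}ec form_sumr big1 ?eqxx // => s _; have := H s; rewrite negbK => /eqP ->.
  by rewrite mulr0.
set w' := gpact u^-1%g w.
have Ww' : W w' by exact: Wact.
have hw' : form w' (gminor 1%g) != 0 by rewrite /w' form_gpact invgK gpact_gminor mul1g.
have [a' ew'] := gspan_mono (sub _ Ww').
set lam := \sum_(j : 'S_n * 'S_m) a' j * ev (lft j.2 * j.1)%g (gminor 1%g).
have kw : kappa w' = lam *: gminor 1%g.
  rewrite ew' kappa_sum /lam scaler_suml; apply: eq_bigr => j _.
  by rewrite kappa_mono scalerA.
have Wk : W (kappa w').
  by apply: closed_sum => // x; exact: Wact.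
have lam0 : lam != 0.
  apply/eqP => l0.
  have : form (kappa w') (gminor 1%g) = (#|'S_m|)%:R * form w' (gminor 1%g).
    rewrite /kappa form_suml.
    transitivity (\sum_(x : 'S_m) form w' (gminor 1%g)).
      apply: eq_bigr => x _.
      rewrite form_gpact gpact_gminor mul1g -lftV gminor_lft formZr sgV.
      by rewrite mulrA sg_sq mul1r.
    rewrite -sum1_card natr_sum mulr_suml; apply: eq_big => // x _; by rewrite mul1r.
  rewrite kw l0 scale0r form0l => /esym /eqP; rewrite mulf_eq0 (negbTE hw') orbF.
  rewrite pnatr_eq0 card_Sn => /eqP h; by move: (fact_gt0 m); rewrite h.
have Wg1 : W (gminor 1%g).
  have -> : gminor 1%g = lam^-1 *: kappa w' + 0 by rewrite addr0 kw scalerA mulVf // scale1r.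
  exact: WC.
move=> v /gspanP [c ->]; apply: closed_sum => // s.
by rewrite -(mul1g s) -gpact_gminor; exact: Wact.
Qed.

End Form.

Section Phi.

Lemma comp_comp (k1 k2 k3 : nat) (p : {mpoly rat[k1]})
    (L1 : k1.-tuple {mpoly rat[k2]}) (L2 : k2.-tuple {mpoly rat[k3]}) :
  (p \mPo L1) \mPo L2 = p \mPo [tuple (tnth L1 i) \mPo L2 | i < k1].
Proof.
rewrite [p \mPo L1]comp_mpolyEX [RHS]comp_mpolyEX raddf_sum /=.
apply: eq_bigr => mm _; rewrite comp_mpolyZ !comp_mpolyX rmorph_prod.
congr (_ *: _); apply: eq_bigr => i _; by rewrite rmorphXn tnth_mktuple.
Qed.

Variable m : nat.
Local Notation n := (m + m).
Local Notation lsh := (@lshift m m).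
Local Notation rsh := (@rshift m m).

Definition phv (k : 'I_(n * n)) : xring m :=
  \sum_(e < m) 'X_(gdec k).1 ^+ e * 'X_(gdec k).2 ^+ e.
Definition phi (p : gring m) : xring m := p \mPo [tuple phv k | k < n * n].

Lemma phi_g (i j : 'I_n) : phi (g i j) = \sum_(e < m) 'X_i ^+ e * 'X_j ^+ e.
Proof.
rewrite /phi /g; case: ifP => _; rewrite comp_mpolyXU -tnth_nth tnth_mktuple
  /phv gdec_gvar //=.
by apply: eq_bigr => e _; rewrite mulrC.
Qed.

Lemma phiD : {morph phi : x y / x + y}.
Proof. by move=> x y; rewrite /phi comp_mpolyD. Qed.
Lemma phiZ c p : phi (c *: p) = c *: phi p.
Proof. by rewrite /phi comp_mpolyZ. Qed.
Lemma phi0 : phi 0 = 0.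
Proof. by rewrite /phi comp_mpoly0. Qed.
Lemma phi_sum (J : finType) (c : J -> rat) (F : J -> gring m) :
  phi (\sum_j c j *: F j) = \sum_j c j *: phi (F j).
Proof. rewrite /phi raddf_sum; apply: eq_bigr => j _; exact: comp_mpolyZ. Qed.

Lemma vflip (x : 'I_m -> xring m) :
  \prod_(i < m) \prod_(j < m | (i < j)%N) (x j - x i) =
  (\prod_(i < m) (-1) ^+ #|[pred j : 'I_m | (i < j)%N]|) *
  \prod_(i < m) \prod_(j < m | (i < j)%N) (x i - x j).
Proof.
rewrite -big_split /=; apply: eq_bigr => i _.
rewrite -prodrN; apply: eq_bigr => j _; by rewrite opprB.
Qed.

Lemma phi_gminor (s : 'S_n) : phi (gminor s) = xdelta s.
Proof.
pose a1 : 'rV[xring m]_m := \row_p 'X_(s (lsh p)).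
pose a2 : 'rV[xring m]_m := \row_p 'X_(s (rsh p)).
have -> : phi (gminor s) = \det ((Vandermonde m a1)^T *m Vandermonde m a2).
  rewrite /gminor /phi -det_map_mx; congr (\det _); apply/matrixP => p q.
  rewrite !mxE; apply: etrans (phi_g _ _) _; apply: eq_bigr => e _; by rewrite !mxE.
rewrite det_mulmx det_tr !det_Vandermonde /xdelta.
under eq_bigr do under eq_bigr do rewrite !mxE.
under [X in _ * X]eq_bigr do under eq_bigr do rewrite !mxE.
rewrite (vflip (fun p => 'X_(s (lsh p)))) (vflip (fun p => 'X_(s (rsh p)))).
rewrite mulrACA -big_split /= big1 ?mul1r // => i _.
by rewrite -exprMn mulrNN mulr1 expr1n.
Qed.

Lemma phi_gpact (s : 'S_n) p : phi (gpact s p) = xpact s (phi p).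
Proof.
rewrite /phi /gpact /xpact !comp_comp; congr (p \mPo _).
apply: eq_from_tnth => k; rewrite !tnth_mktuple; apply: etrans (phi_g _ _) _.
rewrite /phv.
rewrite rmorph_sum; apply: eq_bigr => e _.
by rewrite rmorphM !rmorphXn /= !comp_mpolyXU -!tnth_nth !tnth_mktuple.
Qed.

Lemma Xneq (i j : 'I_n) : i != j -> ('X_i : xring m) != 'X_j.
Proof.
move=> nij; apply/eqP => e.
have := congr1 (meval (fun k : 'I_n => ((k == i)%:R : rat))) e.
rewrite !mevalXU eqxx eq_sym (negbTE nij) => /eqP; by rewrite oner_eq0.
Qed.

Lemma xdelta1_neq0 : xdelta (1%g : 'S_n) != 0.
Proof.
rewrite /xdelta mulf_neq0 //; apply/prodf_neq0 => p _; apply/prodf_neq0 => q pq;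
  rewrite subr_eq0 !perm1 Xneq //.
  by rewrite eq_lshift; apply: contraTneq pq => ->; rewrite ltnn.
by rewrite eq_rshift; apply: contraTneq pq => ->; rewrite ltnn.
Qed.

End Phi.

Unset Implicit Arguments.
Theorem mainTheorem3 (m : nat) :
  (* the span of the orbit is S_n-stable and irreducible *)
  (forall (s : 'S_(m + m)) v, @gspan m v -> @gspan m (@gpact m s v)) /\
  irreducible_rep (@gpact m) (@gspan m) /\
  (* g[i_1..|..i_n] |-> Delta(i_1..i_m)Delta(i_{m+1}..i_n) extends to an
     S_n-equivariant Q-linear isomorphism gspan -> specht2 *)
  exists f : gring m -> xring m,
    (forall s : 'S_(m + m), f (gminor s) = xdelta s) /\
    (forall (a : rat) u v, @gspan m u -> @gspan m v -> f (a *: u + v) = a *: f u + f v) /\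
    (forall u v, @gspan m u -> @gspan m v -> f u = f v -> u = v) /\
    (forall v, @gspan m v -> @specht2 m (f v)) /\
    (forall w, @specht2 m w -> exists v, @gspan m v /\ f v = w) /\
    (forall (s : 'S_(m + m)) v, @gspan m v -> f (gpact s v) = xpact s (f v)).
Proof.
split; first by move=> s v; exact: gspan_act.
split; first exact: gspan_irr.
exists (@phi m); split; first exact: phi_gminor.
split; first by move=> a u v _ _; rewrite phiD phiZ.
split.
  move=> u v gu gv e.
  pose W (v : gring m) := gspan v /\ phi v = 0.
  have [_ irr] := gspan_irr m.
  have := irr W.
  case.
  - by move=> x [].
  - by split; [exact: gspan0 | exact: phi0].
  - move=> a x y [gx px] [gy py]; split; first exact: gspanC.
    by rewrite phiD phiZ px py scaler0 addr0.
  - move=> s x [gx px]; split; first exact: gspan_act.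
    by rewrite phi_gpact px /xpact comp_mpoly0.
  - move=> H; apply/eqP; rewrite -subr_eq0; apply/eqP; apply: H; split.
      by rewrite addrC -scaleN1r; apply: gspanC.
    by rewrite -scaleN1r phiD phiZ e scaleN1r subrr.
  - move=> H; have [_ h] := H _ (gspan_gminor 1%g).
    by move: (xdelta1_neq0 m); rewrite -phi_gminor h eqxx.
split.
  move=> v /gspanP [c ->]; apply/specht2P; exists c.
  by rewrite phi_sum; apply: eq_bigr => s _; rewrite phi_gminor.
split.
  move=> w /specht2P [c ->]; exists (\sum_s c s *: gminor s); split.
    by apply/gspanP; exists c.
  by rewrite phi_sum; apply: eq_bigr => s _; rewrite phi_gminor.
by move=> s v _; exact: phi_gpact.
Qed.
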